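(* Let $\mathbb{Z} = \langle g\rangle$ act freely and cospecially on a CAT(0) cube complex $X$ by combinatorial isometries. Let $x\in X^{(0)}$ be a vertex and $p$ its projection onto $\mathrm{Min}(g)$. Then there exists a geodesic edge path from $x$ to $gx$ which passes through the vertices $p$ and $gp$.
   Context: $\mathrm{Min}(g)$ is the subcomplex spanned by the vertices $x$ minimizing the combinatorial distance $d(x,gx)$; it is a convex subcomplex. For a convex subcomplex $A$ and a vertex $x$, the projection $\pi_A(x)$ is the unique vertex of $A$ such that for every vertex $a$ of $A$, $d(x,a)=d(x,\pi_A(x))+d(\pi_A(x),a)$. Geodesic edge paths are geodesics in the 1-skeleton. An action is cospecial if the quotient cube complex is special in the sense of Haglund–Wise. *)

(* Defs.v *)
From Stdlib Require Import List Relations.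
Import ListNotations.

(* walk adj x p y : x, p_1, ..., p_n = y is an edge path; its length is
   length p and its vertex sequence is x :: p. *)
Inductive walk {V : Type} (adj : V -> V -> Prop) : V -> list V -> V -> Prop :=
| walk_nil x : walk adj x nil x
| walk_cons x y p z : adj x y -> walk adj y p z -> walk adj x (y :: p) z.

Definition geodesic {V : Type} (adj : V -> V -> Prop) (x : V) (p : list V) (y : V) : Prop :=
  walk adj x p y /\ forall q, walk adj x q y -> length p <= length q.

Definition dist {V : Type} (adj : V -> V -> Prop) (x y : V) (n : nat) : Prop :=
  exists p, geodesic adj x p y /\ length p = n.

Definition in_interval {V : Type} (adj : V -> V -> Prop) (x y m : V) : Prop :=
  exists p, geodesic adj x p y /\ In m (x :: p).

(* By the theorem of Chepoi /
   Roller / Gerasimov these are exactly the 1-skeleta of CAT(0) cube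
   complexes, and the CAT(0) cube complex is recovered from its 1-skeleton
   by filling in every cube subgraph. *)
Definition median_graph {V : Type} (adj : V -> V -> Prop) : Prop :=
  (forall u v, adj u v -> adj v u) /\
  (forall u, ~ adj u u) /\
  (forall x y, exists p, walk adj x p y) /\
  (forall x y z, exists m,
      in_interval adj x y m /\ in_interval adj y z m /\ in_interval adj x z m /\
      forall m', in_interval adj x y m' -> in_interval adj y z m' ->
                 in_interval adj x z m' -> m' = m).

(* combinatorial isometry = automorphism of the cube complex = graph
   automorphism of its 1-skeleton *)
Definition graph_automorphism {V : Type} (adj : V -> V -> Prop) (g : V -> V) : Prop :=
  (exists h : V -> V, (forall v, h (g v) = v) /\ (forall v, g (h v) = v)) /\
  (forall u v, adj u v <-> adj (g u) (g v)).

(* the action of Z = <g> is free: g^n x <> x for n <> 0 (it suffices to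
   consider n > 0, since g^(-n) x = x iff g^n x = x). *)
Definition free_Zaction {V : Type} (g : V -> V) : Prop :=
  forall (n : nat) (x : V), 0 < n -> Nat.iter n g x <> x.

Definition square {V : Type} (adj : V -> V -> Prop) (a b c d : V) : Prop :=
  adj a b /\ adj b c /\ adj c d /\ adj d a /\ a <> c /\ b <> d.

(* oriented edges are pairs (u,v) with adj u v.
   Elementary parallelism: in the square a-b-c-d, the oriented edge (a,b)
   is parallel to the opposite oriented edge (d,c). *)
Definition opp_step {V : Type} (adj : V -> V -> Prop) (e f : V * V) : Prop :=
  exists a b c d, square adj a b c d /\ e = (a, b) /\ f = (d, c).

Definition g_step {V : Type} (g : V -> V) (e f : V * V) : Prop :=
  f = (g (fst e), g (snd e)).

(* Oriented parallelism in the quotient Y = X/<g>, read on lifts: two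
   oriented edges of X are related iff their images in Y are oriented-dual
   to the same hyperplane of Y with the same orientation, i.e. the
   equivalence relation generated by square-parallelism and the action. *)
Definition qpar {V : Type} (adj : V -> V -> Prop) (g : V -> V) : relation (V * V) :=
  clos_refl_sym_trans (V * V) (fun e f => opp_step adj e f \/ g_step g e f).

(* unoriented version: the images are dual to the same hyperplane of Y *)
Definition qupar {V : Type} (adj : V -> V -> Prop) (g : V -> V) (e f : V * V) : Prop :=
  qpar adj g e f \/ qpar adj g e (snd f, fst f).

Definition corner {V : Type} (adj : V -> V -> Prop) (a b c : V) : Prop :=
  exists d, square adj b a c d.

Definition q_self_intersection {V : Type} (adj : V -> V -> Prop) (g : V -> V) : Prop :=
  exists a b c, corner adj a b c /\ qupar adj g (a, b) (a, c).

Definition q_one_sided {V : Type} (adj : V -> V -> Prop) (g : V -> V) : Prop :=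
  exists u v, adj u v /\ qpar adj g (u, v) (v, u).

Definition q_direct_self_osculation {V : Type} (adj : V -> V -> Prop) (g : V -> V) : Prop :=
  exists a b c, adj a b /\ adj a c /\ b <> c /\ ~ corner adj a b c /\
    (qpar adj g (a, b) (a, c) \/ qpar adj g (b, a) (c, a)).

Definition q_inter_osculation {V : Type} (adj : V -> V -> Prop) (g : V -> V) : Prop :=
  exists a b c a' b' c',
    corner adj a b c /\ ~ qupar adj g (a, b) (a, c) /\
    adj a' b' /\ adj a' c' /\ b' <> c' /\ ~ corner adj a' b' c' /\
    qupar adj g (a, b) (a', b') /\ qupar adj g (a, c) (a', c').

(* Z = <g> acts freely and cospecially: free, and the quotient cube complex
   X/<g> is special in the sense of Haglund--Wise. *)
Definition cospecial_Zaction {V : Type} (adj : V -> V -> Prop) (g : V -> V) : Prop :=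
  free_Zaction g /\
  ~ q_self_intersection adj g /\ ~ q_one_sided adj g /\
  ~ q_direct_self_osculation adj g /\ ~ q_inter_osculation adj g.

Definition in_Min {V : Type} (adj : V -> V -> Prop) (g : V -> V) (x : V) : Prop :=
  forall y n m, dist adj x (g x) n -> dist adj y (g y) m -> n <= m.

Definition is_projection {V : Type} (adj : V -> V -> Prop) (A : V -> Prop) (x p : V) : Prop :=
  A p /\ forall a n1 n2 n3, A a -> dist adj x a n1 -> dist adj x p n2 ->
                            dist adj p a n3 -> n1 = n2 + n3.

(* Main.v *)
Require Import Defs.
From Stdlib Require Import List Relations Lia Classical ClassicalEpsilon PeanoNat.
Import ListNotations.

Lemma nat_min_ex (P : nat -> Prop) : (exists n, P n) -> exists n, P n /\ forall k, P k -> n <= k.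
Proof.
  intros [n Hn]. revert Hn. induction n as [n IH] using (well_founded_induction Wf_nat.lt_wf).
  intros Hn. destruct (classic (exists k, P k /\ k < n)) as [[k [Hk Hlt]]|Hno].
  - exact (IH k Hlt Hk).
  - exists n. split; auto. intros k Hk. destruct (Nat.le_gt_cases n k); auto.
    exfalso; apply Hno; eauto.
Qed.

Section Med.
Variable V : Type.
Variable adj : V -> V -> Prop.
Hypothesis Hmed : median_graph adj.

Lemma adj_sym u v : adj u v -> adj v u.
Proof. destruct Hmed as [H _]. apply H. Qed.
Lemma adj_irr u : ~ adj u u.
Proof. destruct Hmed as [_ [H _]]. apply H. Qed.

Lemma walk_app x p y q z : walk adj x p y -> walk adj y q z -> walk adj x (p ++ q) z.
Proof. induction 1; simpl; auto. intros; econstructor; eauto. Qed.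

Lemma walk_rev x p y : walk adj x p y -> exists q, walk adj y q x /\ length q = length p.
Proof.
  induction 1.
  - exists nil; split; [constructor|auto].
  - destruct IHwalk as [q [Hq Hl]]. exists (q ++ [x]). split.
    + apply walk_app with y; auto. econstructor. apply adj_sym; auto. constructor.
    + rewrite length_app; simpl; lia.
Qed.

Lemma walk_split x p y m : walk adj x p y -> In m (x :: p) ->
  exists p1 p2, walk adj x p1 m /\ walk adj m p2 y /\ length p1 + length p2 = length p.
Proof.
  induction 1; intros Hin.
  - destruct Hin as [<-|[]]. exists nil, nil; repeat split; constructor.
  - destruct Hin as [<-|Hin].
    + exists nil, (y :: p). repeat split; [constructor| econstructor; eauto].
    + destruct (IHwalk Hin) as [p1 [p2 [H1 [H2 Hl]]]].
      exists (y :: p1), p2. repeat split; auto. econstructor; eauto. simpl; lia.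
Qed.

Lemma walk_ex x y : exists p, walk adj x p y.
Proof. destruct Hmed as [_ [_ [H _]]]. apply H. Qed.

Lemma dist_ex x y : exists n, dist adj x y n.
Proof.
  destruct (nat_min_ex (fun n => exists p, walk adj x p y /\ length p = n)) as [n [[p [Hp Hl]] Hmin]].
  - destruct (walk_ex x y) as [p Hp]; eauto.
  - exists n, p. repeat split; auto. intros q Hq. rewrite Hl. apply Hmin; eauto.
Qed.

Definition d x y : nat := proj1_sig (constructive_indefinite_description _ (dist_ex x y)).

Lemma dist_d x y : dist adj x y (d x y).
Proof. unfold d. destruct (constructive_indefinite_description _ _); auto. Qed.

Lemma d_walk x y : exists p, walk adj x p y /\ length p = d x y.
Proof. destruct (dist_d x y) as [p [[Hp _] Hl]]; eauto. Qed.

Lemma d_le_walk x p y : walk adj x p y -> d x y <= length p.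
Proof. intros Hw. destruct (dist_d x y) as [q [[Hq Hmin] Hl]]. rewrite <- Hl. auto. Qed.

Lemma dist_eq x y n : dist adj x y n -> n = d x y.
Proof.
  intros [p [[Hp Hmin] Hl]]. destruct (dist_d x y) as [q [[Hq Hmin'] Hl']].
  specialize (Hmin _ Hq). specialize (Hmin' _ Hp). lia.
Qed.

Lemma geodesic_of x p y : walk adj x p y -> length p = d x y -> geodesic adj x p y.
Proof. intros Hw Hl. split; auto. intros q Hq. rewrite Hl. apply d_le_walk; auto. Qed.

Lemma d_refl x : d x x = 0.
Proof. pose proof (d_le_walk x nil x (walk_nil _ x)). simpl in *; lia. Qed.

Lemma d_zero x y : d x y = 0 -> x = y.
Proof. intros H. destruct (d_walk x y) as [p [Hp Hl]]. destruct Hp; simpl in *; auto; lia. Qed.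

Lemma d_sym x y : d x y = d y x.
Proof.
  destruct (d_walk x y) as [p [Hp Hl]]. destruct (d_walk y x) as [q [Hq Hl']].
  destruct (walk_rev _ _ _ Hp) as [p' [Hp' E]]. destruct (walk_rev _ _ _ Hq) as [q' [Hq' E']].
  pose proof (d_le_walk _ _ _ Hp'). pose proof (d_le_walk _ _ _ Hq'). lia.
Qed.

Lemma d_tri x y z : d x z <= d x y + d y z.
Proof.
  destruct (d_walk x y) as [p [Hp Hl]]. destruct (d_walk y z) as [q [Hq Hl']].
  pose proof (d_le_walk _ _ _ (walk_app _ _ _ _ _ Hp Hq)). rewrite length_app in *. lia.
Qed.

Lemma d_adj x y : adj x y -> d x y = 1.
Proof.
  intros H. pose proof (d_le_walk x [y] y (walk_cons _ _ _ _ _ H (walk_nil _ y))).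
  simpl in *. destruct (d x y) eqn:E; [|lia]. apply d_zero in E; subst. exfalso; eapply adj_irr; eauto.
Qed.

Lemma d_step x y n : d x y = S n -> exists x1, adj x x1 /\ d x1 y = n.
Proof.
  intros H. destruct (d_walk x y) as [p [Hp Hl]]. destruct Hp as [|x y' p z Ha Hw]; simpl in *; [lia|].
  exists y'. split; auto. pose proof (d_le_walk _ _ _ Hw). pose proof (d_tri x y' z).
  rewrite (d_adj _ _ Ha) in *. lia.
Qed.

Lemma d_one x y : d x y = 1 -> adj x y.
Proof.
  intros H. destruct (d_step _ _ _ H) as [x1 [Ha E]]. apply d_zero in E; subst; auto.
Qed.

Lemma walk_last_in x p y : walk adj x p y -> In y (x :: p).
Proof. induction 1; simpl in *; [auto|]. destruct IHwalk; subst; auto. Qed.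

Lemma interval_iff x y m : in_interval adj x y m <-> d x m + d m y = d x y.
Proof.
  split.
  - intros [p [[Hp Hmin] Hin]]. destruct (walk_split _ _ _ _ Hp Hin) as [p1 [p2 [H1 [H2 Hl]]]].
    pose proof (d_le_walk _ _ _ H1). pose proof (d_le_walk _ _ _ H2). pose proof (d_tri x m y).
    pose proof (dist_eq x y (length p) (ex_intro _ p (conj (conj Hp Hmin) eq_refl))). lia.
  - intros E. destruct (d_walk x m) as [p [Hp Hl]]. destruct (d_walk m y) as [q [Hq Hl']].
    exists (p ++ q). split.
    + apply geodesic_of. eapply walk_app; eauto. rewrite length_app; lia.
    + pose proof (walk_last_in _ _ _ Hp) as Hin. destruct Hin as [<-|Hin]; [left; auto|].
      right. apply in_or_app. auto.
Qed.

Lemma median_d x y z : exists m, d x m + d m y = d x y /\ d y m + d m z = d y z /\ d x m + d m z = d x z /\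
  forall m', d x m' + d m' y = d x y -> d y m' + d m' z = d y z -> d x m' + d m' z = d x z -> m' = m.
Proof.
  destruct Hmed as [_ [_ [_ H]]]. destruct (H x y z) as [m [H1 [H2 [H3 H4]]]].
  exists m. rewrite <- !interval_iff. repeat split; auto.
  intros m' A B C. apply H4; apply interval_iff; auto.
Qed.

Lemma bip u v w : adj u v -> d w v = S (d w u) \/ d w u = S (d w v).
Proof.
  intros H. pose proof (d_adj _ _ H) as E. pose proof (d_tri w u v). pose proof (d_tri w v u).
  pose proof (d_sym u v).
  destruct (Nat.eq_dec (d w u) (d w v)) as [Eq|]; [|lia]. exfalso.
  destruct (median_d u v w) as [m [M1 [M2 [M3 _]]]].
  pose proof (d_sym w u). pose proof (d_sym w v).
  assert (d u m = 0 \/ d m v = 0) as [Z|Z] by lia; apply d_zero in Z; subst; rewrite d_refl in *; lia.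
Qed.

Definition W u v z := d z v = S (d z u).

Lemma W_excl u v z : W u v z -> W v u z -> False.
Proof. unfold W; lia. Qed.

Lemma W_part u v z : adj u v -> W u v z \/ W v u z.
Proof. unfold W; intros H; destruct (bip u v z H); auto. Qed.

Lemma W_self u v : adj u v -> W u v u.
Proof. unfold W; intros H. rewrite d_refl, d_adj; auto. Qed.

Lemma W_not u v z : adj u v -> ~ W u v z -> W v u z.
Proof. intros H N. destruct (W_part u v z H); tauto. Qed.

Lemma nbr2 a b c : adj a b -> adj b c -> a <> c -> d a c = 2.
Proof.
  intros H1 H2 N. pose proof (d_tri a b c). rewrite (d_adj _ _ H1), (d_adj _ _ H2) in *.
  destruct (d a c) as [|[|[|]]] eqn:E; try lia.
  - apply d_zero in E; contradiction.
  - apply d_one in E. pose proof (d_adj _ _ (adj_sym _ _ H1)). pose proof (d_adj _ _ H2).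
    destruct (bip a c b E); lia.
Qed.

Lemma sq_W a b c e w : adj a b -> adj b c -> adj c e -> adj e a -> a <> c -> b <> e ->
  W a b w -> W e c w.
Proof.
  unfold W. intros Hab Hbc Hce Hea Nac Nbe Hw.
  pose proof (bip _ _ w Hea). pose proof (bip _ _ w Hbc). pose proof (bip _ _ w Hce).
  destruct (Nat.eq_dec (d w c) (S (d w e))) as [|Ne]; auto. exfalso.
  assert (Hc : d w c = d w a /\ d w e = S (d w a)) by lia. destruct Hc as [Hc He].
  destruct (median_d a c w) as [m [M1 [M2 [M3 _]]]].
  pose proof (nbr2 a b c Hab Hbc Nac) as Dac.
  pose proof (d_sym w a). pose proof (d_sym w c). pose proof (d_sym c m).
  assert (Ham : d a m = 1) by lia. assert (Hmc : d m c = 1) by lia.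
  apply d_one in Ham. apply d_one in Hmc.
  assert (Nbm : b <> m) by (intro; subst; pose proof (d_sym m w); lia).
  assert (Nem : e <> m) by (intro; subst; pose proof (d_sym m w); lia).
  destruct (median_d b e m) as [m0 [_ [_ [_ U]]]].
  pose proof (nbr2 b a e (adj_sym _ _ Hab) (adj_sym _ _ Hea) Nbe) as Dbe.
  pose proof (nbr2 e a m Hea Ham Nem) as Dem.
  pose proof (nbr2 b a m (adj_sym _ _ Hab) Ham Nbm) as Dbm.
  pose proof (nbr2 b c e Hbc Hce Nbe) as Dbe'.
  pose proof (nbr2 e c m (adj_sym _ _ Hce) (adj_sym _ _ Hmc) Nem) as Dem'.
  pose proof (nbr2 b c m Hbc (adj_sym _ _ Hmc) Nbm) as Dbm'.
  assert (Hd : forall x y, adj x y -> d x y = 1 /\ d y x = 1).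
  { intros x y Hxy. split; [apply d_adj; auto| apply d_adj, adj_sym; auto]. }
  destruct (Hd _ _ Hab), (Hd _ _ Hbc), (Hd _ _ Hce), (Hd _ _ Hea), (Hd _ _ Ham), (Hd _ _ Hmc).
  assert (a = m0) by (apply U; lia).
  assert (c = m0) by (apply U; lia).
  congruence.
Qed.

Lemma ladder_step u v u' v' k : adj u v -> adj u' v' -> d u u' = S k -> d v v' = S k ->
  d u v' = S (S k) -> d v u' = S (S k) ->
  exists w m, adj w m /\ d u w = k /\ d v m = k /\ d u m = S k /\ d v w = S k /\
    square adj u' v' m w /\ square adj w m v' u'.
Proof.
  intros Huv Hu' E1 E2 E3 E4.
  rewrite d_sym in E1. destruct (d_step _ _ _ E1) as [w [Hw Ew]]. rewrite d_sym in E1.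
  assert (Hd : forall x y, adj x y -> d x y = 1 /\ d y x = 1).
  { intros x y Hxy. split; [apply d_adj; auto| apply d_adj, adj_sym; auto]. }
  destruct (Hd _ _ Huv), (Hd _ _ Hu'), (Hd _ _ Hw).
  pose proof (d_sym w u). pose proof (d_tri w u' v'). pose proof (d_tri u w v').
  pose proof (d_tri v u w). pose proof (d_tri v w u').
  pose proof (d_sym v w). pose proof (d_sym w v').
  destruct (median_d w v' v) as [m [M1 [M2 [M3 _]]]].
  pose proof (d_sym v v'). pose proof (d_sym v m). pose proof (d_sym m v').
  assert (Hwm : d w m = 1) by lia. assert (Hmv : d m v' = 1) by lia.
  apply d_one in Hwm. apply d_one in Hmv.
  pose proof (d_tri u v m). pose proof (d_tri u m v').
  assert (Nu'm : u' <> m) by (intro; subst; lia).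
  assert (Nv'w : v' <> w) by (intro; subst; rewrite d_refl in *; lia).
  exists w, m. repeat split; auto; try lia; apply adj_sym; auto.
Qed.

Lemma ladder k : forall u v u' v', adj u v -> adj u' v' -> d u u' = k -> d v v' = k ->
  d u v' = S k -> d v u' = S k ->
  (forall z, W u v z <-> W u' v' z) /\ (forall g, qpar adj g (u, v) (u', v')).
Proof.
  induction k as [|k IH]; intros u v u' v' Huv Hu' E1 E2 E3 E4.
  - apply d_zero in E1. apply d_zero in E2. subst. split; [tauto|]. intros; apply rst_refl.
  - destruct (ladder_step _ _ _ _ _ Huv Hu' E1 E2 E3 E4) as [w [m [Hwm [F1 [F2 [F3 [F4 [S1 S2]]]]]]]].
    destruct (IH u v w m Huv Hwm F1 F2 F3 F4) as [K Q].
    destruct S1 as (A1 & A2 & A3 & A4 & A5 & A6). destruct S2 as (B1 & B2 & B3 & B4 & B5 & B6).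
    split.
    + intros z. rewrite K. split; intros Hz.
      * eapply (sq_W w m v' u'); eauto.
      * eapply (sq_W u' v' m w); eauto.
    + intros g. eapply rst_trans; [apply Q|]. apply rst_sym, rst_step. left.
      exists u', v', m, w. repeat split; auto.
Qed.

Definition Cross u v u' v' := adj u v /\ adj u' v' /\ W u v u' /\ W v u v'.

Lemma cross_eqd u v u' v' : Cross u v u' v' -> d u u' = d v v'.
Proof.
  unfold Cross, W. intros (H1 & H2 & H3 & H4).
  pose proof (d_adj _ _ H2). pose proof (d_adj _ _ (adj_sym _ _ H2)).
  pose proof (d_tri v v' u'). pose proof (d_tri u u' v').
  pose proof (d_sym u u'). pose proof (d_sym v v'). pose proof (d_sym v u'). pose proof (d_sym u v'). lia.
Qed.

Lemma cross_W u v u' v' : Cross u v u' v' -> forall z, W u v z <-> W u' v' z.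
Proof.
  intros C. pose proof (cross_eqd _ _ _ _ C). destruct C as (H1 & H2 & H3 & H4). unfold W in *.
  pose proof (d_sym u u'). pose proof (d_sym v v'). pose proof (d_sym v u'). pose proof (d_sym u v').
  apply (proj1 (ladder (d u u') u v u' v' H1 H2 eq_refl ltac:(lia) ltac:(lia) ltac:(lia))).
Qed.

Lemma cross_q u v u' v' g : Cross u v u' v' -> qpar adj g (u, v) (u', v').
Proof.
  intros C. pose proof (cross_eqd _ _ _ _ C). destruct C as (H1 & H2 & H3 & H4). unfold W in *.
  pose proof (d_sym u u'). pose proof (d_sym v v'). pose proof (d_sym v u'). pose proof (d_sym u v').
  apply (proj2 (ladder (d u u') u v u' v' H1 H2 eq_refl ltac:(lia) ltac:(lia) ltac:(lia))).
Qed.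

Lemma cross_edge n : forall u v z a, adj u v -> W u v z -> W v u a -> d z a = n ->
  exists s t, adj s t /\ W u v s /\ W v u t /\ d z s + 1 + d t a = d z a.
Proof.
  induction n as [|n IH]; intros u v z a Huv Hz Ha E.
  - apply d_zero in E; subst. exfalso; eapply W_excl; eauto.
  - destruct (d_step _ _ _ E) as [z1 [Hz1 E1]].
    destruct (W_part u v z1 Huv) as [Hw|Hw].
    + destruct (IH u v z1 a Huv Hw Ha E1) as [s [t [Hst [Hs [Ht Eq]]]]].
      exists s, t. repeat split; auto.
      pose proof (d_tri z z1 s). pose proof (d_adj _ _ Hz1). pose proof (d_tri z s t).
      pose proof (d_tri z t a). pose proof (d_adj _ _ Hst). lia.
    + exists z, z1. repeat split; auto. rewrite d_refl. pose proof (d_adj _ _ Hz1). lia.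
Qed.

Lemma conv u v a b c : adj u v -> W u v a -> W u v b -> d a c + d c b = d a b -> W u v c.
Proof.
  intros Huv Ha Hb E. apply NNPP. intros Nc. apply W_not in Nc; auto.
  destruct (cross_edge _ u v a c Huv Ha Nc eq_refl) as [s [t [Hst [Hs [Ht Eq]]]]].
  assert (C : Cross u v s t) by (repeat split; auto).
  apply (cross_W _ _ _ _ C) in Hb. unfold W in Hb.
  pose proof (d_tri a s b). pose proof (d_tri t c b). pose proof (d_sym b t). pose proof (d_sym b s).
  pose proof (d_tri s t b). pose proof (d_adj _ _ Hst). lia.
Qed.

Lemma d_pos x y : x <> y -> exists j, d x y = S j.
Proof. intros N. destruct (d x y) eqn:E; eauto. apply d_zero in E; contradiction. Qed.

Lemma crossing_square a1 b1 a2 b2 q1 q2 q3 q4 : adj a1 b1 -> adj a2 b2 ->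
  W a1 b1 q1 -> W a2 b2 q1 -> W b1 a1 q2 -> W a2 b2 q2 ->
  W a1 b1 q3 -> W b2 a2 q3 -> W b1 a1 q4 -> W b2 a2 q4 ->
  exists s t1 t2, corner adj s t1 t2 /\ Cross a1 b1 t1 s /\ Cross a2 b2 s t2.
Proof.
  intros H1 H2 Q1 Q1' Q2 Q2' Q3 Q3' Q4 Q4'.
  destruct (nat_min_ex (fun n => exists b c, W b1 a1 b /\ W a2 b2 b /\ W a1 b1 c /\ W b2 a2 c /\ d b c = n))
    as [n [[b [c (Bb & Ab & Ac & Bc & En)]] Hmin]]; [eauto 10|].
  subst n.
  destruct (median_d b c q1) as [am [M1 [M2 [M3 _]]]].
  assert (Aam' : W a2 b2 am) by (eapply (conv a2 b2 b q1); eauto).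
  assert (Aam : W a1 b1 am) by (eapply (conv a1 b1 c q1); eauto).
  assert (Nb : b <> am) by (intro; subst; eapply W_excl; eauto).
  destruct (d_pos _ _ Nb) as [j Ej]. destruct (d_step _ _ _ Ej) as [t1 [Ht1 Et1]].
  assert (At1' : W a2 b2 t1).
  { eapply (conv a2 b2 b am); eauto. rewrite (d_adj _ _ Ht1). lia. }
  assert (At1 : W a1 b1 t1).
  { apply NNPP; intros N. apply W_not in N; auto.
    pose proof (d_tri t1 am c). assert (d b c <= d t1 c) by (apply Hmin; eauto 10). lia. }
  destruct (median_d b c q4) as [dm [N1 [N2 [N3 _]]]].
  assert (Bdm : W b1 a1 dm) by (eapply (conv b1 a1 b q4); eauto using adj_sym).
  assert (Bdm' : W b2 a2 dm) by (eapply (conv b2 a2 c q4); eauto using adj_sym).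
  assert (Nb' : b <> dm) by (intro; subst; eapply W_excl; eauto).
  destruct (d_pos _ _ Nb') as [i Ei]. destruct (d_step _ _ _ Ei) as [t2 [Ht2 Et2]].
  assert (Bt2 : W b1 a1 t2).
  { eapply (conv b1 a1 b dm); eauto using adj_sym. rewrite (d_adj _ _ Ht2). lia. }
  assert (Bt2' : W b2 a2 t2).
  { apply NNPP; intros N. apply W_not in N; auto using adj_sym.
    pose proof (d_tri t2 dm c). assert (d b c <= d t2 c) by (apply Hmin; eauto 10). lia. }
  assert (N12 : t1 <> t2) by (intro; subst; eapply W_excl; eauto).
  pose proof (nbr2 t1 b t2 (adj_sym _ _ Ht1) Ht2 N12) as D12.
  destruct (median_d t1 t2 c) as [m [K1 [K2 [K3 _]]]].
  assert (Am : W a1 b1 m) by (eapply (conv a1 b1 t1 c); eauto).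
  assert (Bm : W b2 a2 m) by (eapply (conv b2 a2 t2 c); eauto using adj_sym; rewrite (d_sym m t2); lia).
  assert (Nm1 : t1 <> m) by (intro; subst; exact (W_excl _ _ _ At1' (W_not _ _ _ H2 (fun X => W_excl _ _ _ X Bm)) ) ).
  assert (Nm2 : t2 <> m) by (intro; subst; exact (W_excl _ _ _ Am Bt2)).
  assert (Nbm : b <> m) by (intro; subst; exact (W_excl _ _ _ Am Bb)).
  destruct (d_pos _ _ Nm1) as [k1 Ek1]. destruct (d_pos _ _ Nm2) as [k2 Ek2].
  pose proof (d_sym t2 m).
  assert (E1 : d t1 m = 1) by lia. assert (E2 : d m t2 = 1) by lia.
  apply d_one in E1. apply d_one in E2.
  exists b, t1, t2. repeat split; auto.
  - exists m. repeat split; auto using adj_sym.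
  - apply adj_sym; auto.
Qed.

Lemma cross_Wrev u v u' v' : Cross u v u' v' -> forall z, W v u z <-> W v' u' z.
Proof.
  intros C z. pose proof (cross_W _ _ _ _ C z) as E. destruct C as (H1 & H2 & _).
  split; intros Hz.
  - apply (W_not u' v'); auto. intros N. apply E in N. eapply W_excl; eauto.
  - apply (W_not u v); auto. intros N. apply E in N. eapply W_excl; eauto.
Qed.

Lemma qpar_rev g e f : qpar adj g e f -> qpar adj g (snd e, fst e) (snd f, fst f).
Proof.
  induction 1 as [e f H| | |]; [destruct H as [H|H]|..].
  - apply rst_step. left. destruct H as (a & b & c & dd & (S1 & S2 & S3 & S4 & S5 & S6) & -> & ->).
    exists b, a, dd, c. simpl. repeat split; auto using adj_sym.
  - apply rst_step. right. unfold g_step in *. subst f. reflexivity.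
  - apply rst_refl.
  - apply rst_sym; auto.
  - eapply rst_trans; eauto.
Qed.

Definition Iso (f f' : V -> V) := (forall v, f' (f v) = v) /\ (forall v, f (f' v) = v) /\
  (forall u v, adj u v <-> adj (f u) (f v)).

Lemma Iso_sym f f' : Iso f f' -> Iso f' f.
Proof.
  intros (H1 & H2 & H3). repeat split; auto; intros Ha.
  - apply H3. rewrite !H2; auto.
  - apply H3 in Ha. rewrite !H2 in Ha; auto.
Qed.

Lemma walk_map f f' x l y : Iso f f' -> walk adj x l y -> walk adj (f x) (map f l) (f y).
Proof.
  intros I. induction 1; simpl; [constructor|]. econstructor; [apply (proj1 (proj2 (proj2 I) _ _) H)|auto].
Qed.

Lemma iso_d f f' a b : Iso f f' -> d (f a) (f b) = d a b.
Proof.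
  intros I.
  assert (Hle : forall f f' a b, Iso f f' -> d (f a) (f b) <= d a b).
  { clear. intros f f' a b I. destruct (d_walk a b) as [l [Hl E]].
    pose proof (d_le_walk _ _ _ (walk_map _ _ _ _ _ I Hl)). rewrite length_map in *; lia. }
  pose proof (Hle _ _ a b I). pose proof (Hle _ _ (f a) (f b) (Iso_sym _ _ I)).
  destruct I as (H1 & _). rewrite !H1 in *. lia.
Qed.

Lemma iso_W f f' a b z : Iso f f' -> (W (f a) (f b) (f z) <-> W a b z).
Proof. intros I. unfold W. rewrite !(iso_d _ _ _ _ I). tauto. Qed.

Lemma Iso_iter f f' k : Iso f f' -> Iso (Nat.iter k f) (Nat.iter k f').
Proof.
  intros I. pose proof I as (H1 & H2 & H3). induction k as [|k (K1 & K2 & K3)]; [repeat split; simpl; tauto|].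
  repeat split.
  - intros v. rewrite Nat.iter_succ_r. simpl. rewrite H1; auto.
  - intros v. rewrite Nat.iter_succ_r. simpl. rewrite H2; auto.
  - intros Ha. simpl. apply (proj1 (H3 _ _)), (proj1 (K3 _ _)); auto.
  - simpl. intros Ha. apply (proj2 (K3 _ _)), (proj2 (H3 _ _)); auto.
Qed.

Lemma iso_W_iter f f' k a b z : Iso f f' ->
  (W (Nat.iter k f a) (Nat.iter k f b) z <-> W a b (Nat.iter k f' z)).
Proof.
  intros I. pose proof (Iso_iter _ _ k I) as Ik. pose proof Ik as (K1 & K2 & _).
  rewrite <- (K2 z) at 1. apply iso_W with (f' := Nat.iter k f'); auto.
Qed.

Section Chain.
Variables (f f' : V -> V) (x x' : V).
Hypothesis If : Iso f f'.
Hypothesis Hxx : adj x x'.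
Hypothesis Hnest : forall z, W (f x) (f x') z -> W x x' z.
Variable z0 : V.
Hypothesis Hz0 : W x x' z0.
Hypothesis Nz0 : ~ W (f x) (f x') z0.

Definition Sk k z := W (Nat.iter k f x) (Nat.iter k f x') z.

Lemma Sk_adj k : adj (Nat.iter k f x) (Nat.iter k f x').
Proof. exact (proj1 (proj2 (proj2 (Iso_iter _ _ k If)) _ _) Hxx). Qed.

Lemma Sk_nest k z : Sk (S k) z -> Sk k z.
Proof.
  unfold Sk. intros H. apply (iso_W_iter f f'); auto.
  rewrite Nat.iter_succ_r, (Nat.iter_succ_r k _ f x') in H.
  apply (iso_W_iter f f') in H; auto.
Qed.

Lemma Sk_0 k z : Sk k z -> Sk 0 z.
Proof. induction k; auto. intros H; apply IHk, Sk_nest; auto. Qed.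

Lemma Sk_strict k : Sk k (Nat.iter k f z0) /\ ~ Sk (S k) (Nat.iter k f z0).
Proof.
  pose proof (Iso_iter _ _ k If) as (K1 & _). unfold Sk. split.
  - apply (iso_W_iter f f'); auto. rewrite K1; auto.
  - rewrite Nat.iter_succ_r, (Nat.iter_succ_r k _ f x'). intros H.
    apply (iso_W_iter f f') in H; auto. rewrite K1 in H; auto.
Qed.

Lemma chainN k : forall z a, Sk k z -> ~ Sk 0 a -> k + 1 <= d z a.
Proof.
  induction k as [|k IH]; intros z a Hz Ha.
  - destruct (d z a) eqn:E; [|lia]. apply d_zero in E; subst; contradiction.
  - assert (Ha' : ~ Sk (S k) a) by (intros N; apply Ha, (Sk_0 _ _ N)).
    apply W_not in Ha'; [|apply Sk_adj].
    destruct (cross_edge _ _ _ z a (Sk_adj (S k)) Hz Ha' eq_refl) as [s [t [Hst [Hs [Ht Eq]]]]].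
    assert (C : Cross (Nat.iter (S k) f x) (Nat.iter (S k) f x') s t) by (repeat split; auto; apply Sk_adj).
    destruct (classic (Sk k t)) as [Hk|Hk].
    + specialize (IH t a Hk Ha). lia.
    + exfalso. apply W_not in Hk; [|apply Sk_adj].
      assert (C' : Cross (Nat.iter k f x) (Nat.iter k f x') s t) by (split; [apply Sk_adj|split; [exact Hst|split; [apply (Sk_nest k s Hs)|exact Hk]]]).
      destruct (Sk_strict k) as [P1 P2]. apply P2.
      apply (cross_W _ _ _ _ C). apply (cross_W _ _ _ _ C'). exact P1.
Qed.

Lemma chain_final p : (forall k, ~ W x x' (Nat.iter k f p)) -> False.
Proof.
  intros Hp. set (n := d x p).
  assert (H1 : Sk n (Nat.iter n f x)) by (apply W_self, Sk_adj).
  pose proof (chainN n _ (Nat.iter n f p) H1 (Hp n)).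
  rewrite (iso_d _ _ _ _ (Iso_iter _ _ n If)) in H. unfold n in H. lia.
Qed.
End Chain.

Section G.
Variables g h : V -> V.
Hypothesis Igh : Iso g h.
Hypothesis Nsi : ~ q_self_intersection adj g.
Hypothesis Nos : ~ q_one_sided adj g.

Definition D a := d a (g a).
Definition M a := forall y, D a <= D y.

Lemma hg v : h (g v) = v. Proof. apply Igh. Qed.
Lemma gh v : g (h v) = v. Proof. apply Igh. Qed.
Lemma adj_g u v : adj u v -> adj (g u) (g v). Proof. apply Igh. Qed.
Lemma Ihg : Iso h g. Proof. apply Iso_sym, Igh. Qed.
Lemma adj_h u v : adj u v -> adj (h u) (h v). Proof. apply Ihg. Qed.

Lemma M_g a : M a -> M (g a).
Proof. unfold M, D. intros H y. rewrite (iso_d _ _ _ _ Igh). apply H. Qed.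
Lemma M_h a : M a -> M (h a).
Proof.
  unfold M, D. intros H y. rewrite gh. rewrite <- (iso_d _ _ (h a) a Igh), gh. apply H.
Qed.
Lemma M_iter_g k a : M a -> M (Nat.iter k g a).
Proof. induction k; simpl; auto using M_g. Qed.
Lemma M_iter_h k a : M a -> M (Nat.iter k h a).
Proof. induction k; simpl; auto using M_h. Qed.

Lemma gate_case x x' p : adj x x' -> Cross x x' (g x) (g x') -> (forall a, M a -> W x' x a) -> M p -> False.
Proof.
  intros Hxx C Hmin Mp.
  assert (AB : forall z, W x' x z <-> ~ W x x' z).
  { intros z; split; intros Hz. intros N; eapply W_excl; eauto. apply W_not; auto. }
  assert (Ag : forall z, W x x' (g z) <-> W x x' z).
  { intros z. rewrite (cross_W _ _ _ _ C). apply iso_W with (f' := h); auto. }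
  assert (Ah : forall z, W x x' (h z) <-> W x x' z).
  { intros z. rewrite <- Ag, gh. tauto. }
  set (Bd := fun c => W x' x c /\ exists c', adj c c' /\ W x x' c').
  assert (Bd_g : forall c, Bd c -> Bd (g c)).
  { intros c [B1 [c' [E1 E2]]]. split. rewrite AB, Ag, <- AB; auto.
    exists (g c'). split; [apply adj_g; auto| apply Ag; auto]. }
  assert (Bd_h : forall c, Bd c -> Bd (h c)).
  { intros c [B1 [c' [E1 E2]]]. split. rewrite AB, Ah, <- AB; auto.
    exists (h c'). split; [apply adj_h; auto| apply Ah; auto]. }
  assert (Bd_conv : forall u v w, Bd u -> Bd v -> d u w + d w v = d u v -> Bd w).
  { intros u v w [Bu [u' [Eu Au]]] [Bv [v' [Ev Av]]] Ew.
    assert (Cu : Cross x x' u' u) by (repeat split; auto using adj_sym).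
    assert (Cv : Cross x x' v' v) by (repeat split; auto using adj_sym).
    assert (Cuv : Cross u' u v' v).
    { repeat split; auto using adj_sym. apply (cross_W _ _ _ _ Cu); auto. apply (cross_Wrev _ _ _ _ Cu); auto. }
    pose proof (cross_eqd _ _ _ _ Cuv) as Euv.
    assert (Bw : W x' x w) by (apply (conv x' x u v w); auto using adj_sym).
    destruct (median_d w u' v') as [m [M1 [M2 [M3 _]]]].
    assert (Am : W x x' m) by (apply (conv x x' u' v' m); auto; rewrite (d_sym u' m); lia).
    assert (Nwm : w <> m) by (intro; subst; eapply W_excl; eauto).
    pose proof (d_tri w u u'). pose proof (d_tri w v v'). rewrite (d_adj _ _ Eu), (d_adj _ _ Ev) in *.
    pose proof (d_sym u' m). pose proof (d_sym u' v'). pose proof (d_sym v w). pose proof (d_sym u w).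
    destruct (d_pos _ _ Nwm) as [j Ej].
    assert (E1 : d w m = 1) by lia. apply d_one in E1.
    split; auto. exists m; split; auto. }
  assert (Bx' : Bd x') by (split; [apply W_self, adj_sym; auto| exists x; split; [apply adj_sym; auto| apply W_self; auto]]).
  destruct (nat_min_ex (fun n => exists c, Bd c /\ d p c = n)) as [n [[c [Bc En]] Hmn]]; [eauto|]. subst n.
  assert (Gate : forall c', Bd c' -> d p c' = d p c + d c c').
  { intros c' Bc'. destruct (median_d p c c') as [mm [M1 [M2 [M3 _]]]].
    assert (Bmm : Bd mm) by (apply (Bd_conv c c' mm); auto; rewrite (d_sym c mm); lia).
    assert (d p c <= d p mm) by (apply Hmn; eauto).
    assert (Z : d mm c = 0) by lia. apply d_zero in Z. subst mm. rewrite d_refl in *. lia. }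
  assert (Gate' : forall c', Bd c' -> d (g p) c' = d (g p) (g c) + d (g c) c').
  { intros c' Bc'. rewrite <- (gh c'). rewrite !(iso_d _ _ _ _ Igh). apply Gate; auto. }
  assert (Dc : D c <= D p).
  { unfold D. pose proof (Gate (g c) (Bd_g _ Bc)). pose proof (Gate' c Bc).
    pose proof (d_tri p (g p) (g c)). pose proof (d_tri (g p) p c).
    rewrite (iso_d _ _ _ _ Igh) in *. pose proof (d_sym p (g p)). pose proof (d_sym c (g c)). lia. }
  assert (Mc : M c) by (intros y; specialize (Mp y); lia).
  destruct Bc as [Bc [c' [Ec Ac]]].
  assert (Cc : Cross x x' c' c) by (repeat split; auto using adj_sym).
  assert (Cg : Cross c' c (g c') (g c)).
  { repeat split; auto using adj_sym, adj_g.
    apply (cross_W _ _ _ _ Cc). apply Ag; auto.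
    apply (cross_Wrev _ _ _ _ Cc). rewrite AB, Ag, <- AB; auto. }
  pose proof (cross_eqd _ _ _ _ Cg).
  assert (Mc' : M c') by (intros y; specialize (Mc y); unfold D in *; lia).
  apply Hmin in Mc'. eapply W_excl; eauto.
Qed.

Lemma q0 x x' : qpar adj g (x, x') (g x, g x').
Proof. apply rst_step. right. reflexivity. Qed.

Lemma si_contra x x' s t1 t2 : Cross x x' t1 s -> Cross (g x) (g x') s t2 -> corner adj s t1 t2 -> False.
Proof.
  intros C1 C2 Co. pose proof (cross_q _ _ _ _ g C1) as Q1. pose proof (cross_q _ _ _ _ g C2) as Q2.
  assert (Q : qpar adj g (t1, s) (s, t2)).
  { eapply rst_trans; [apply rst_sym, Q1|]. eapply rst_trans; [apply q0|]. exact Q2. }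
  apply qpar_rev in Q. simpl in Q. apply Nsi. exists s, t1, t2. split; auto. right. exact Q.
Qed.

Lemma os1 x x' : Cross x x' (g x') (g x) -> False.
Proof.
  intros C. pose proof (cross_q _ _ _ _ g C) as Q. apply Nos. exists (g x), (g x'). split.
  - destruct C as [H _]. apply adj_g; auto.
  - eapply rst_trans; [apply rst_sym, q0|]. exact Q.
Qed.

Lemma os2 x x' : Cross (g x) (g x') x' x -> False.
Proof.
  intros C. pose proof (cross_q _ _ _ _ g C) as Q. apply Nos. exists x, x'. split.
  - destruct C as [_ [H _]]. apply adj_sym; auto.
  - eapply rst_trans; [apply q0|]. exact Q.
Qed.

Lemma key x x' p : adj x x' -> (forall a, M a -> W x' x a) -> M p ->
  W x' x (g x) /\ W (g x') (g x) x'.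
Proof.
  intros Hxx Hmin Mp. pose proof (adj_g _ _ Hxx) as Hg.
  assert (MinB' : forall a, M a -> W (g x') (g x) a).
  { intros a Ma. rewrite <- (gh a). apply iso_W with (f' := h); auto. apply Hmin, M_h; auto. }
  pose proof (Hmin p Mp) as Bp. pose proof (MinB' p Mp) as Bp'.
  pose proof (W_self _ _ Hxx) as Ax. pose proof (W_self _ _ (adj_sym _ _ Hxx)) as Bx'.
  pose proof (W_self _ _ Hg) as Agx. pose proof (W_self _ _ (adj_sym _ _ Hg)) as Bgx'.
  destruct (W_part x x' (g x) Hxx) as [A1|B1];
  destruct (W_part x x' (g x') Hxx) as [A2|B2].
  -
    destruct (W_part (g x) (g x') x Hg) as [A3|B3];
    destruct (W_part (g x) (g x') x' Hg) as [A4|B4].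
    + exfalso. destruct (crossing_square x x' (g x) (g x') x x' (g x') p) as [s [t1 [t2 [Co [C1 C2]]]]]; auto.
      exact (si_contra _ _ _ _ _ C1 C2 Co).
    + exfalso. assert (C : Cross (g x) (g x') x x') by (repeat split; auto).
      apply (cross_Wrev _ _ _ _ C) in Bgx'. exact (W_excl _ _ _ A2 Bgx').
    + exfalso. apply (os2 x x'). repeat split; auto using adj_sym.
    + exfalso. destruct (classic (exists z, W x' x z /\ W (g x) (g x') z)) as [[z [Bz Az]]|Nz].
      * destruct (crossing_square x x' (g x) (g x') (g x) z (g x') p) as [s [t1 [t2 [Co [C1 C2]]]]]; auto.
        exact (si_contra _ _ _ _ _ C1 C2 Co).
      * apply (chain_final g h x x' Igh Hxx) with (z0 := g x') (p := p).
        -- intros z Az. apply NNPP. intros N. apply W_not in N; auto. apply Nz; eauto.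
        -- auto.
        -- intros N. eapply W_excl; eauto.
        -- intros k N. eapply W_excl; [exact N|]. apply Hmin, M_iter_g; auto.
  - exfalso. apply (gate_case x x' p); auto. repeat split; auto.
  - exfalso. apply (os1 x x'). repeat split; auto using adj_sym.
  -
    destruct (W_part (g x) (g x') x Hg) as [A3|B3];
    destruct (W_part (g x) (g x') x' Hg) as [A4|B4].
    + exfalso. destruct (classic (exists z, W x x' z /\ W (g x') (g x) z)) as [[z [Az Bz]]|Nz].
      * destruct (crossing_square x x' (g x) (g x') x x' z p) as [s [t1 [t2 [Co [C1 C2]]]]]; auto.
        exact (si_contra _ _ _ _ _ C1 C2 Co).
      * apply (chain_final h g x x' Ihg Hxx) with (z0 := x) (p := p).
        -- intros z Az. pose proof (proj2 (iso_W g h (h x) (h x') z Igh) Az) as H1. rewrite !gh in H1.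
           apply (iso_W g h x x' z Igh).
           apply NNPP. intros N. apply W_not in N; auto. apply Nz. exists (g z); split; auto.
        -- auto.
        -- intros N. pose proof (proj2 (iso_W g h (h x) (h x') x Igh) N) as N'. rewrite !gh in N'.
           exact (W_excl _ _ _ N' B1).
        -- intros k N. eapply W_excl; [exact N|]. apply Hmin, M_iter_h; auto.
    + exfalso. assert (C : Cross (g x) (g x') x x') by (repeat split; auto).
      apply (cross_W _ _ _ _ C) in Agx. exact (W_excl _ _ _ Agx B1).
    + exfalso. apply (os2 x x'). repeat split; auto using adj_sym.
    + split; auto.
Qed.

Lemma main_ind p : M p -> forall n x, d x p = n -> (forall a, M a -> d x a = d x p + d p a) ->
  D x = 2 * n + D p.
Proof.
  intros Mp n. induction n as [|n IH]; intros x E Hg.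
  - apply d_zero in E. subst. lia.
  - destruct (d_step _ _ _ E) as [x1 [Hx1 E1]].
    assert (G1 : forall a, M a -> d x1 a = d x1 p + d p a).
    { intros a Ma. specialize (Hg a Ma). pose proof (d_tri x x1 a). pose proof (d_tri x1 p a).
      rewrite (d_adj _ _ Hx1) in *. lia. }
    assert (Bm : forall a, M a -> W x1 x a).
    { intros a Ma. unfold W. specialize (Hg a Ma). pose proof (d_tri x x1 a). pose proof (d_tri x1 p a).
      rewrite (d_adj _ _ Hx1) in *. rewrite (d_sym a x), (d_sym a x1). lia. }
    destruct (key x x1 p Hx1 Bm Mp) as [K1 K2]. unfold W in K1, K2.
    specialize (IH x1 E1 G1). unfold D in *. rewrite (d_sym (g x) x), (d_sym (g x) x1) in K1. lia.
Qed.
End G.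
End Med.

Theorem lemma3p5 (V : Type) (adj : V -> V -> Prop) (g : V -> V) (x p : V) :
  median_graph adj ->
  graph_automorphism adj g ->
  cospecial_Zaction adj g ->
  is_projection adj (in_Min adj g) x p ->
  exists q : list V, geodesic adj x q (g x) /\ In p (x :: q) /\ In (g p) (x :: q).
Proof.
  intros Hmed [[h [H1 H2]] H3] (_ & Nsi & Nos & _) [Pm Pg].
  assert (Igh : Iso V adj g h) by (repeat split; auto; apply H3).
  assert (toM : forall a, in_Min adj g a -> M V adj Hmed g a).
  { intros a Ha y. unfold D. apply (Ha y); apply dist_d. }
  assert (ofM : forall a, M V adj Hmed g a -> in_Min adj g a).
  { intros a Ha y n m Hn Hm. rewrite (dist_eq _ _ Hmed _ _ _ Hn), (dist_eq _ _ Hmed _ _ _ Hm). apply Ha. }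
  assert (Mp : M V adj Hmed g p) by auto.
  assert (Gx : forall a, M V adj Hmed g a -> d V adj Hmed x a = d V adj Hmed x p + d V adj Hmed p a).
  { intros a Ma. apply (Pg a); auto; apply dist_d. }
  pose proof (main_ind V adj Hmed g h Igh Nsi Nos p Mp _ x eq_refl Gx) as DX. unfold D in DX.
  destruct (d_walk V adj Hmed x p) as [l1 [W1 L1]].
  destruct (d_walk V adj Hmed p (g p)) as [l2 [W2 L2]].
  destruct (d_walk V adj Hmed p x) as [l3 [W3 L3]].
  pose proof (walk_map V adj g h p l3 x Igh W3) as W3'.
  exists (l1 ++ l2 ++ map g l3). split; [|split].
  - apply (geodesic_of V adj Hmed). eapply walk_app; [exact W1|]. eapply walk_app; [exact W2|exact W3'].
    rewrite !length_app, length_map. rewrite (d_sym V adj Hmed p x) in L3. lia.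
  - pose proof (walk_last_in V adj x l1 p W1) as I1. destruct I1 as [I1|I1]; [left; auto|].
    right. apply in_or_app; auto.
  - pose proof (walk_last_in V adj p l2 (g p) W2) as I2. destruct I2 as [I2|I2].
    + rewrite <- I2. pose proof (walk_last_in V adj x l1 p W1) as I1. destruct I1 as [I1|I1]; [left; auto|].
      right. apply in_or_app; auto.
    + right. apply in_or_app; right. apply in_or_app; auto.
Qed.
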